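(* For every integer $n\ge 7$ there exists a $2$-connected detour covered graph of order $n$ which is not cummerbund covered. For every integer $n\ge 12$ there exists a $2$-connected cummerbund covered graph of order $n$ which is not detour covered.
   Context: All graphs are finite and simple. A detour of a graph is a longest path in the graph, and a cummerbund is a longest cycle. A graph is detour covered if every vertex lies in some detour, and cummerbund covered if every vertex lies in some cummerbund. *)

(* Defs.v *)
From mathcomp Require Import all_boot.
Set Implicit Arguments. Unset Strict Implicit. Unset Printing Implicit Defensive.

Definition simple_graph (T : finType) (e : rel T) : Prop :=
  symmetric e /\ irreflexive e.

(* A path: nonempty sequence of pairwise distinct vertices, consecutive ones
   adjacent. Its length (number of edges) is size p - 1. *)
Definition is_path (T : finType) (e : rel T) (p : seq T) : Prop :=
  [/\ p != [::], uniq p & sorted e p].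

(* A cycle: sequence of at least 3 pairwise distinct vertices, consecutive
   ones adjacent and last adjacent to first. Its length is size c. *)
Definition is_cycle (T : finType) (e : rel T) (c : seq T) : Prop :=
  [/\ 3 <= size c, uniq c & cycle e c].

Definition detour (T : finType) (e : rel T) (p : seq T) : Prop :=
  is_path e p /\ forall q, is_path e q -> size q <= size p.

Definition cummerbund (T : finType) (e : rel T) (c : seq T) : Prop :=
  is_cycle e c /\ forall d, is_cycle e d -> size d <= size c.

Definition detour_covered (T : finType) (e : rel T) : Prop :=
  forall v : T, exists p, detour e p /\ v \in p.

Definition cummerbund_covered (T : finType) (e : rel T) : Prop :=
  forall v : T, exists c, cummerbund e c /\ v \in c.

Definition connected_on (T : finType) (e : rel T) (S : {set T}) : Prop :=
  forall x y, x \in S -> y \in S ->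
    exists p, [/\ is_path e p, head x p = x, last x p = y & all (mem S) p].

Definition two_connected (T : finType) (e : rel T) : Prop :=
  [/\ 2 < #|T|, connected_on e setT &
      forall v : T, connected_on e (setT :\ v)].

(* Main.v *)
Require Import Defs.
From mathcomp Require Import all_boot zify.
Set Implicit Arguments. Unset Strict Implicit. Unset Printing Implicit Defensive.

Definition E n (r : rel nat) : rel 'I_n := fun i j => r (val i) (val j).

Lemma lift_seq n (L : seq nat) : all (fun i => i < n) L -> exists p : seq 'I_n, map val p = L.
Proof.
elim: L => [|x L IH] /=; first by exists [::].
case/andP=> xn /IH [p Hp]; exists (Ordinal xn :: p); by rewrite /= Hp.
Qed.

Lemma is_path_E n r (p : seq 'I_n) :
  is_path (E r) p <-> [/\ map val p != [::], uniq (map val p) & sorted r (map val p)].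
Proof.
rewrite /is_path (map_inj_uniq val_inj) sorted_map.
by case: p.
Qed.

Lemma is_cycle_E n r (p : seq 'I_n) :
  is_cycle (E r) p <-> [/\ 3 <= size (map val p), uniq (map val p) & cycle r (map val p)].
Proof. by rewrite /is_cycle (map_inj_uniq val_inj) cycle_map size_map. Qed.

Lemma size_ord n (p : seq 'I_n) : uniq p -> size p <= n.
Proof.
move=> u; rewrite -[X in _ <= X](size_enum_ord n).
by apply: uniq_leq_size => // x _; rewrite mem_enum.
Qed.

Lemma simple_E n r : symmetric r -> irreflexive r -> simple_graph (E r (n:=n)).
Proof. by move=> s i; split => [x y|x]; rewrite /E; [apply: s|apply: i]. Qed.

Lemma conn_hub n r (S : {set 'I_n}) (P : pred nat) (h : nat) :
  symmetric r -> (forall x : 'I_n, (x \in S) = P x) -> h < n -> P h ->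
  (forall x, x < n -> P x -> exists s, [/\ path r x s, last x s = h & all (fun y => (y < n) && P y) s]) ->
  connected_on (E r) S.
Proof.
move=> sr HS hn Ph Hw.
pose eS := [rel x y : 'I_n | E r x y && (x \in S) && (y \in S)].
have eSsym : symmetric eS by move=> x y; rewrite /eS /= /E sr andbAC.
have toh : forall x : 'I_n, x \in S -> connect eS x (Ordinal hn).
  move=> x xS; have := Hw x (ltn_ord x); rewrite -HS => /(_ xS) [s [ps ls als]].
  have [p Hp] : exists p : seq 'I_n, map val p = s.
    by apply: lift_seq; apply/allP => y /(allP als) /andP[].
  apply/connectP; exists p; last first.
    by apply: val_inj; rewrite /= -(last_map val) Hp ls.
  subst s; clear ls; move: ps als xS; elim: p x => [|y p IH] x //=.
  case/andP=> rxy pp /andP[/andP[_ Py] ap] xS.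
  have yS : y \in S by rewrite HS.
  by rewrite /eS /E /= rxy xS yS /=; apply: IH.
move=> x y xS yS.
have : connect eS x y.
  apply: connect_trans (toh x xS) _.
  by rewrite (sym_connect_sym eSsym); apply: toh.
case/connectP=> p pp ->.
case: (shortenP pp) => p' pp' up' _.
exists (x :: p'); split => //.
- by rewrite /is_path /=; split => //; apply: sub_path pp' => u v /andP[/andP[]].
- have : all (mem S) (x :: p').
    clear -pp' xS; elim: p' x pp' xS => [|z q IH] u /=; first by move=> _ ->.
    case/andP=> /andP[/andP[_ uS] zS] pq _.
    by rewrite uS; apply: (IH z pq zS).
  done.
Qed.


Lemma path_iota (r : rel nat) m k : (forall i, m <= i -> r i i.+1) -> path r m (iota m.+1 k).
Proof.
elim: k m => [|k IH] m H //=; rewrite H //=; apply: IH => i Hi; apply: H; lia.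
Qed.

Lemma last_iota m k : last m (iota m.+1 k) = m + k.
Proof. elim: k m => [|k IH] m /=; [lia | rewrite IH; lia]. Qed.

Lemma run_cls (r : rel nat) (cut : pred nat) (cls : nat -> nat) :
  (forall x y, r x y -> ~~ cut x -> ~~ cut y -> cls x = cls y) ->
  forall x s, path r x s -> ~~ cut x -> all (predC cut) s -> all (fun y => cls y == cls x) s.
Proof.
move=> H x s; elim: s x => [|y s IH] x //= /andP[rxy ps] cx /andP[cy as_].
have e := H x y rxy cx cy.
rewrite -e eqxx /= e; exact: IH y ps cy as_.
Qed.

Definition r1 (i j : nat) : bool := (i != j) && [|| (i <= 1) && (2 <= j), (j <= 1) && (2 <= i), [&& 3 <= i, i <= 4, 3 <= j & j <= 4] | (5 <= i) && (5 <= j)].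
Lemma r1_sym : symmetric r1.
Proof. move=> i j; rewrite /r1; apply/idP/idP; lia. Qed.
Lemma r1_irr : irreflexive r1.
Proof. move=> i; rewrite /r1; lia. Qed.

Lemma all_rot_ (P : pred nat) i s : all P (rot i s) = all P s.
Proof. by apply: eq_all_r => x; rewrite mem_rot. Qed.

Lemma p1_cyc n s : 7 <= n -> uniq s -> cycle r1 s -> 2 \in s -> all (gtn n) s -> size s <= n - 2.
Proof.
move=> n7 us cs s2 sn.
case: (rot_to s2) => i s' Hr.
have u' : uniq (2 :: s') by rewrite -Hr rot_uniq.
have c' : cycle r1 (2 :: s') by rewrite -Hr rot_cycle.
have a' : all (gtn n) (2 :: s') by rewrite -Hr all_rot_.
rewrite -(size_rot i s) Hr.
clear Hr us cs s2 sn.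
case: s' u' c' a' => [|x s'] /=; first by lia.
case/lastP: s' => [|t y] /=; first by lia.
rewrite rcons_path last_rcons rcons_path => u' /and3P[r2x /andP[pt _] ry2] a'.
have hx : x <= 1 by move: r2x; rewrite /r1; lia.
have hy : y <= 1 by move: ry2; rewrite /r1; lia.
rewrite size_rcons.
move/and3P: u' => [H2 Hx]; rewrite rcons_uniq => /andP[Hy ut].
have xy : x != y by apply: contraNneq Hx => ->; rewrite mem_rcons inE eqxx.
have t3 : all (fun z => 3 <= z) t.
  apply/allP => z zt.
  have : z != 2 by apply: contraNneq H2 => <-; rewrite inE mem_rcons inE zt !orbT.
  have : z != x by apply: contraNneq Hx => <-; rewrite mem_rcons inE zt orbT.
  have : z != y by apply: contraNneq Hy => <-.
  lia.
have tn : all (gtn n) t.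
  by apply/allP => z zt; move/and3P: a' => [_ _ /allP]; apply; rewrite mem_rcons inE zt orbT.
case: t pt t3 tn ut {H2 Hx Hy a'} => [|z t] /=; first by lia.
move=> /andP[_ pt] /andP[z3 t3] /andP[zn tn] /andP[zt ut].
have Hc : forall u v, r1 u v -> ~~ (u <= 2) -> ~~ (v <= 2) -> nat_of_bool (u <= 4) = nat_of_bool (v <= 4).
  move=> u v; rewrite /r1 => ruv cu cv; move: ruv; case: (leqP u 4); case: (leqP v 4) => //=; lia.
have t2 : all (predC (fun i => i <= 2)) t by apply/allP => w wt; have := allP t3 w wt; rewrite /=; lia.
have H := run_cls Hc pt (_ : ~~ (z <= 2)) t2.
have {}H : all (fun y => (y <= 4) == (z <= 4)) t.
  have := H ltac:(lia) => /allP Hall; apply/allP => w wt; have := Hall w wt.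
  by case: (w <= 4); case: (z <= 4).
case: (leqP z 4) => hz.
- have : size (z :: t) <= size [:: 3; 4].
    apply: uniq_leq_size; first by rewrite /= zt.
    move=> w; rewrite inE => /orP[/eqP -> | wt]; rewrite !inE; first by lia.
    have := allP t3 w wt; have := allP H w wt; rewrite hz => /eqP; lia.
  rewrite /=; lia.
- have : size (z :: t) <= size (iota 5 (n - 5)).
    apply: uniq_leq_size; first by rewrite /= zt.
    move=> w; rewrite inE mem_iota => /orP[/eqP -> | wt]; first by lia.
    have := allP tn w wt; have := allP H w wt; rewrite (leqNgt z 4) hz /= => /eqP; lia.
  rewrite size_iota /=; lia.
Qed.


Definition C1 k := [:: 0; 3; 4; 1; 5] ++ iota 6 k.+1.

Lemma C1_cycle k : cycle r1 (C1 k).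
Proof.
rewrite /C1 /= rcons_path last_iota path_iota.
  by rewrite /r1 /=.
by move=> i Hi; rewrite /r1; lia.
Qed.

Lemma C1_uniq k : uniq (C1 k).
Proof. rewrite /C1 cat_uniq iota_uniq andbT; apply/andP; split => //; apply/hasPn => x; rewrite mem_iota !inE; lia. Qed.

Lemma C1_size k : size (C1 k) = k + 6.
Proof. rewrite /C1 size_cat size_iota /=; lia. Qed.

Lemma C1_lt k : all (gtn (k + 7)) (C1 k).
Proof. apply/allP => x; rewrite /C1 mem_cat mem_iota !inE /=; lia. Qed.

Lemma C1_mem k x : x < k + 7 -> x != 2 -> x \in C1 k.
Proof. rewrite /C1 mem_cat mem_iota !inE; lia. Qed.

Lemma C1_2 k : 2 \notin C1 k.
Proof. rewrite /C1 mem_cat mem_iota !inE; lia. Qed.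

Lemma P1_path k : path r1 2 (C1 k).
Proof. rewrite /C1 /= path_iota //; move=> i Hi; rewrite /r1; lia. Qed.

Lemma part1 n : 7 <= n -> exists e : rel 'I_n,
  [/\ simple_graph e, two_connected e, detour_covered e & ~ cummerbund_covered e].
Proof.
move=> n7; have [k ->] : exists k, n = k + 7 by exists (n - 7); lia.
exists (E r1); split.
- exact: simple_E r1_sym r1_irr.
- split.
  + by rewrite card_ord; lia.
  + apply: (@conn_hub _ r1 setT predT 0) => //; first exact: r1_sym.
    * by move=> x; rewrite in_setT.
    * by lia.
    * move=> x xn _; case: (ltnP 1 x) => hx.
        by exists [:: 0]; split => //=; rewrite ?andbT /r1; lia.
      case: x hx xn => [|[|x]] // _ xn.
        by exists [::].
      by exists [:: 3; 0]; split => //=; rewrite ?andbT /r1; lia.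
  + move=> w.
    case: (eqVneq (val w) 0) => hw.
    * apply: (@conn_hub _ r1 _ (fun y => y != val w) 1); first exact: r1_sym.
      - by move=> x; rewrite in_setD1 in_setT andbT val_eqE.
      - by lia.
      - by rewrite hw.
      move=> x xn; rewrite hw => x0.
      case: (eqVneq x 1) => [->|x1]; first by exists [::].
      by exists [:: 1]; split => //=; rewrite ?andbT ?hw /r1; lia.
    * apply: (@conn_hub _ r1 _ (fun y => y != val w) 0); first exact: r1_sym.
      - by move=> x; rewrite in_setD1 in_setT andbT val_eqE.
      - by lia.
      - by rewrite eq_sym hw.
      move=> x xn xw.
      case: (eqVneq x 0) => [->|x0]; first by exists [::].
      case: (eqVneq x 1) => [x1|x1].
        subst x; case: (eqVneq (val w) 5) => h5; [exists [:: 6; 0] | exists [:: 5; 0]];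
          split => //=; rewrite ?h5 /r1 /=; change (\val w) with (nat_of_ord w) in *; lia.
      by exists [:: 0]; split => //=; rewrite /r1 /=; change (\val w) with (nat_of_ord w) in *; lia.
- move=> v.
  have [p Hp] := lift_seq (C1_lt k).
  have [q Hq] : exists q : seq 'I_(k+7), map val q = 2 :: C1 k by apply: lift_seq; apply/andP; split; [lia | exact: C1_lt].
  exists q; split; last first.
    rewrite -(mem_map val_inj) Hq inE; case: (eqVneq (val v) 2) => [->|h] //.
    by rewrite C1_mem ?orbT //; exact: ltn_ord.
  split.
    apply/is_path_E; rewrite Hq; split => //; first by rewrite cons_uniq C1_uniq C1_2.
    exact: P1_path.
  move=> q' [_ uq _].
  have := size_ord uq; rewrite -(size_map val q) Hq; change (size (2 :: C1 k)) with (size (C1 k)).+1; rewrite C1_size -addnS => h; exact: h.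
- move=> H.
  have h2 : 2 < k + 7 by lia.
  have [c [[Hc Hmax] vc]] := H (Ordinal h2).
  have [p Hp] := lift_seq (C1_lt k).
  have : is_cycle (E r1) p.
    apply/is_cycle_E; rewrite Hp C1_size C1_uniq C1_cycle; split => //; lia.
  move/Hmax; rewrite -(size_map val p) Hp C1_size.
  case/is_cycle_E: Hc => _ uc cc.
  have := @p1_cyc (k + 7) (map val c) ltac:(lia) uc cc.
  rewrite size_map.
  have -> : 2 \in map val c by apply/mapP; exists (Ordinal h2).
  move=> /(_ isT).
  have -> : all (gtn (k + 7)) (map val c) by apply/allP => z /mapP [y _ ->]; exact: ltn_ord.
  move=> /(_ isT) h1 h3; have := leq_trans h3 h1; lia.
Qed.


Section Cls.
Variables (r : rel nat) (cut : pred nat) (cls : nat -> nat).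
Hypothesis Hcls : forall x y, r x y -> ~~ cut x -> ~~ cut y -> cls x = cls y.

Definition touched (s : seq nat) k := has (fun x => ~~ cut x && (cls x == k)) s.
Definition U (s : seq nat) := undup (map cls (filter (predC cut) s)).

Lemma U_size x s : path r x s -> size (U (x :: s)) <= count cut (x :: s) + ~~ cut x.
Proof.
elim: s x => [|y s IH] x /=.
  by rewrite /U /=; case: (cut x) => /=.
case/andP=> rxy ps; have := IH y ps.
rewrite /U /=.
case cx : (cut x) => /=; first by case: (cut y) => /=; lia.
case cy : (cut y) => /=.
  move=> h; case: ifP => _ /=; lia.
rewrite (Hcls rxy) ?cx ?cy // inE eqxx /=.
by case: ifP => _ /=; lia.
Qed.

Lemma touched_U s k : touched s k -> k \in U s.
Proof.
case/hasP=> z zs /andP[cz /eqP <-].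
by rewrite /U mem_undup; apply: map_f; rewrite mem_filter /= cz.
Qed.

Lemma ncls x s : path r x s -> forall K, uniq K -> all (touched (x :: s)) K ->
  size K <= count cut (x :: s) + ~~ cut x.
Proof.
move=> ps K uK aK; apply: leq_trans (U_size ps).
apply: uniq_leq_size => // k kK; apply: touched_U; exact: (allP aK).
Qed.

Lemma touched_perm s1 s2 k : perm_eq s1 s2 -> touched s1 k = touched s2 k.
Proof. by move=> p; rewrite /touched (perm_has _ p). Qed.

Lemma ncls_cycle c K : cycle r c -> uniq K -> all (touched c) K ->
  size K <= maxn 1 (count cut c).
Proof.
move=> cc uK aK.
case: (boolP (has cut c)) => hc.
  case/hasP: hc => x xc cx.
  case: (rot_to xc) => i s Hr.
  have pe : perm_eq (rot i c) c by rewrite perm_rot perm_refl.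
  have cc' : cycle r (x :: s) by rewrite -Hr rot_cycle.
  have ps : path r x s by move: cc' => /= ; rewrite rcons_path => /andP[].
  have := ncls ps uK.
  have -> : all (touched (x :: s)) K.
    by apply/allP => k kK; rewrite -Hr (touched_perm _ pe); apply: (allP aK).
  move=> /(_ isT); rewrite cx -Hr.
  have -> : count cut (rot i c) = count cut c by apply/permP.
  lia.
case: c cc aK hc => [|x s] cc aK hc.
  by case: K {uK} aK => //.
have ps : path r x s by move: cc => /= ; rewrite rcons_path => /andP[].
have := ncls ps uK aK.
have -> : count cut (x :: s) = 0 by apply/eqP; rewrite -leqn0 leqNgt -has_count.
move: hc => /=; case: (cut x) => //= _; lia.
Qed.

End Cls.


Lemma two_deg2 (r : rel nat) c u w p1 p2 : symmetric r -> uniq c -> cycle r c ->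
  u \in c -> w \in c -> u != w -> w != p1 -> w != p2 ->
  (forall z, r u z -> (z == p1) || (z == p2)) ->
  (forall z, r w z -> (z == p1) || (z == p2)) -> size c <= 4.
Proof.
move=> sr uc cc uin win uw wp1 wp2 Nu Nw.
rewrite leqNgt; apply/negP => big.
case: (rot_to uin) => i s Hr.
have u' : uniq (u :: s) by rewrite -Hr rot_uniq.
have c' : cycle r (u :: s) by rewrite -Hr rot_cycle.
have w' : w \in u :: s by rewrite -Hr mem_rot.
have sz : size (u :: s) = size c by rewrite -Hr size_rot.
clear Hr uc cc uin win.
case: s u' c' w' sz => [|x s] u' c' w' sz; first by move: big; rewrite -sz.
case/lastP: s u' c' w' sz => [|t y] u' c' w' sz; first by move: big; rewrite -sz.
move: c' => /=; rewrite rcons_path last_rcons rcons_path => /and3P[rux /andP[pt _] ryu].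
have hx := Nu x rux.
have hy : (y == p1) || (y == p2) by apply: Nu; rewrite sr.
move: u'; rewrite cons_uniq => /andP[_]; rewrite cons_uniq rcons_uniq mem_rcons inE => /andP[/norP[xy xt] /andP[yt ut]].
have wt : w \in t.
  move: w'; rewrite !inE mem_rcons inE eq_sym (negbTE uw) /=.
  case/or3P => // /eqP E; subst; lia.
have key : forall z, z \in t -> (z == p1) || (z == p2) -> False.
  move=> z zt hz.
  have : z != x by apply: contraNneq xt => <-.
  have : z != y by apply: contraNneq yt => <-.
  move: hx hy hz xy; lia.
case/splitPr: wt pt ut sz key => t1 t2.
rewrite rcons_cat cat_path /= => /andP[_ /andP[rlw pw]] ut sz key.
case: t1 rlw ut sz key => [|z1 t1] rlw ut sz key; last first.
  apply: (key (last z1 t1)); first by rewrite mem_cat mem_last.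
  by apply: Nw; rewrite sr.
case: t2 pw ut sz key => [|z2 t2] pw ut sz key; last first.
  apply: (key z2); first by rewrite /= !inE eqxx orbT.
  by move: pw => /= /andP[/Nw].
by move: big; rewrite -sz.
Qed.


Definition adj2 (i j : nat) : bool := [|| (i == 0) && [|| j == 2, j == 3, j == 5, j == 6, j == 7 | 10 <= j],
  (i == 1) && [|| j == 2, j == 3, j == 4, j == 8, j == 9 | 10 <= j],
  (i == 2) && (j == 3), (i == 4) && ((j == 5) || (j == 6)), (i == 7) && ((j == 8) || (j == 9)) | (10 <= i) && (10 <= j)].
Definition r2 (i j : nat) : bool := (i != j) && (adj2 i j || adj2 j i).
Lemma r2_sym : symmetric r2.
Proof. by move=> i j; rewrite /r2 eq_sym orbC. Qed.
Lemma r2_irr : irreflexive r2.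
Proof. by move=> i; rewrite /r2 eqxx. Qed.

Definition cut2 (x : nat) : bool := x <= 1.
Definition cls2 (x : nat) : nat := (2 <= x) + (4 <= x) + (7 <= x) + (10 <= x).

Lemma Hcls2 x y : r2 x y -> ~~ cut2 x -> ~~ cut2 y -> cls2 x = cls2 y.
Proof. rewrite /r2 /adj2 /cut2 /cls2; lia. Qed.

Lemma cnt_le (s : seq nat) (p : pred nat) L : uniq s -> (forall x, x \in s -> p x -> x \in L) -> count p s <= size L.
Proof.
move=> us H; rewrite -size_filter; apply: uniq_leq_size; first exact: filter_uniq.
by move=> x; rewrite mem_filter => /andP[px xs]; apply: H.
Qed.

Lemma size_dec (s : seq nat) : size s = count cut2 s + count (fun x => 2 <= x <= 3) s +
  count (fun x => 4 <= x <= 6) s + count (fun x => 7 <= x <= 9) s + count (fun x => 10 <= x) s.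
Proof. elim: s => //= x s ->; rewrite /cut2; lia. Qed.

Lemma untouched (s : seq nat) j (p : pred nat) : (forall x, p x -> ~~ cut2 x && (cls2 x == j)) ->
  ~~ touched cut2 cls2 s j -> count p s = 0.
Proof.
move=> H nt; apply/eqP; rewrite -leqn0 leqNgt -has_count; apply: contra nt => /hasP [x xs px].
by apply/hasP; exists x => //; apply: H.
Qed.

Lemma size_K4 f : size (filter f [:: 1; 2; 3; 4]) = f 1 + f 2 + f 3 + f 4.
Proof. by rewrite /=; case: (f 1); case: (f 2); case: (f 3); case: (f 4). Qed.

Lemma cut_le2 (s : seq nat) : uniq s -> count cut2 s <= 2.
Proof. move=> us; apply: (@cnt_le _ _ [:: 0; 1]) => // x _; rewrite /cut2 !inE; lia. Qed.

Lemma Y_le k (s : seq nat) : uniq s -> all (gtn (k + 13)) s -> count (fun x => 10 <= x) s <= k + 3.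
Proof.
move=> us as_; rewrite -(size_iota 10 (k + 3)); apply: cnt_le => // x xs hx.
by rewrite mem_iota; have := allP as_ x xs; rewrite /=; lia.
Qed.

Lemma p2_path k s : uniq s -> sorted r2 s -> 2 \in s -> all (gtn (k + 13)) s -> size s <= k + 10.
Proof.
move=> us ss s2 as_.
case: s us ss s2 as_ => [|x s] // us ss s2 as_.
set K := filter (touched cut2 cls2 (x :: s)) [:: 1; 2; 3; 4].
have := ncls Hcls2 ss (_ : uniq K) (_ : all (touched cut2 cls2 (x :: s)) K).
rewrite size_K4 => /(_ (filter_uniq _ _) (filter_all _ _)).
have := cut_le2 us.
have t1 : touched cut2 cls2 (x :: s) 1 by apply/hasP; exists 2.
rewrite t1.
have h1 : count (fun x => 2 <= x <= 3) (x :: s) <= 2 by apply: (@cnt_le _ _ [:: 2; 3]) => // z _; rewrite !inE; lia.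
have h2 : count (fun x => 4 <= x <= 6) (x :: s) <= 3 by apply: (@cnt_le _ _ [:: 4; 5; 6]) => // z _; rewrite !inE; lia.
have h3 : count (fun x => 7 <= x <= 9) (x :: s) <= 3 by apply: (@cnt_le _ _ [:: 7; 8; 9]) => // z _; rewrite !inE; lia.
have h4 := Y_le us as_.
have e2 := @untouched (x :: s) 2 (fun x => 4 <= x <= 6) ltac:(move=> z; rewrite /cut2 /cls2; lia).
have e3 := @untouched (x :: s) 3 (fun x => 7 <= x <= 9) ltac:(move=> z; rewrite /cut2 /cls2; lia).
have e4 := @untouched (x :: s) 4 (fun x => 10 <= x) ltac:(move=> z; rewrite /cut2 /cls2; lia).
rewrite size_dec.
set t2 := touched cut2 cls2 (x :: s) 2 in e2 *.
set t3 := touched cut2 cls2 (x :: s) 3 in e3 *.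
set t4 := touched cut2 cls2 (x :: s) 4 in e4 *.
set c2 := count _ (x :: s) in h2 e2 *.
set c3 := count _ (x :: s) in h3 e3 *.
set c4 := count _ (x :: s) in h4 e4 *.
set c1 := count _ (x :: s) in h1 *.
set c0 := count _ (x :: s).
have {}e2 : t2 || (c2 == 0) by case: t2 e2 => //= /(_ isT) ->.
have {}e3 : t3 || (c3 == 0) by case: t3 e3 => //= /(_ isT) ->.
have {}e4 : t4 || (c4 == 0) by case: t4 e4 => //= /(_ isT) ->.
move=> h0 /(_ isT) hK; clearbody t2 t3 t4 c0 c1 c2 c3 c4; lia.
Qed.



Lemma touched_or (s : seq nat) j (p : pred nat) : (forall x, p x -> ~~ cut2 x && (cls2 x == j)) ->
  touched cut2 cls2 s j || (count p s == 0).
Proof.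
move=> H; case: (boolP (touched _ _ _ _)) => //= nt.
by rewrite (untouched H nt).
Qed.

Lemma Pc1 z : 2 <= z <= 3 -> ~~ cut2 z && (cls2 z == 1). Proof. rewrite /cut2 /cls2; lia. Qed.
Lemma Pc2 z : 4 <= z <= 6 -> ~~ cut2 z && (cls2 z == 2). Proof. rewrite /cut2 /cls2; lia. Qed.
Lemma Pc3 z : 7 <= z <= 9 -> ~~ cut2 z && (cls2 z == 3). Proof. rewrite /cut2 /cls2; lia. Qed.
Lemma Pc4 z : 10 <= z -> ~~ cut2 z && (cls2 z == 4). Proof. rewrite /cut2 /cls2; lia. Qed.

Lemma p2_cyc k c : uniq c -> cycle r2 c -> all (gtn (k + 13)) c -> size c <= k + 7.
Proof.
move=> uc cc ac.
case: (leqP (size c) 4) => [|big]; first by lia.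
have l56 : ~~ ((5 \in c) && (6 \in c)).
  apply/negP => /andP[i5 i6].
  have := @two_deg2 r2 c 5 6 0 4 r2_sym uc cc i5 i6 isT isT isT.
  have N : forall u, u \in [:: 5; 6] -> forall z, r2 u z -> (z == 0) || (z == 4).
    by move=> u; rewrite !inE => /orP[] /eqP -> z; rewrite /r2 /adj2 /=; lia.
  by move=> /(_ (N 5 isT) (N 6 isT)); lia.
have l89 : ~~ ((8 \in c) && (9 \in c)).
  apply/negP => /andP[i8 i9].
  have := @two_deg2 r2 c 8 9 1 7 r2_sym uc cc i8 i9 isT isT isT.
  have N : forall u, u \in [:: 8; 9] -> forall z, r2 u z -> (z == 1) || (z == 7).
    by move=> u; rewrite !inE => /orP[] /eqP -> z; rewrite /r2 /adj2 /=; lia.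
  by move=> /(_ (N 8 isT) (N 9 isT)); lia.
set K := filter (touched cut2 cls2 c) [:: 1; 2; 3; 4].
have := ncls_cycle Hcls2 cc (_ : uniq K) (_ : all (touched cut2 cls2 c) K).
rewrite size_K4 => /(_ (filter_uniq _ _) (filter_all _ _)) hK.
have h0 := cut_le2 uc.
have h1 : count (fun x => 2 <= x <= 3) c <= 2 by clear -uc; apply: (@cnt_le _ _ [:: 2; 3]) => // z _; rewrite !inE; lia.
have h2 : count (fun x => 4 <= x <= 6) c <= 2.
  clear -uc l56.
  case: (boolP (5 \in c)) => h5.
    apply: (@cnt_le _ _ [:: 4; 5]) => // z zc; rewrite !inE.
    case: (eqVneq z 6) => [e|]; last by lia.
    by subst; move: l56; rewrite h5 zc.
  apply: (@cnt_le _ _ [:: 4; 6]) => // z zc; rewrite !inE.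
  case: (eqVneq z 5) => [e|]; last by lia.
  by subst; move: h5; rewrite zc.
have h3 : count (fun x => 7 <= x <= 9) c <= 2.
  clear -uc l89.
  case: (boolP (8 \in c)) => h8.
    apply: (@cnt_le _ _ [:: 7; 8]) => // z zc; rewrite !inE.
    case: (eqVneq z 9) => [e|]; last by lia.
    by subst; move: l89; rewrite h8 zc.
  apply: (@cnt_le _ _ [:: 7; 9]) => // z zc; rewrite !inE.
  case: (eqVneq z 8) => [e|]; last by lia.
  by subst; move: h8; rewrite zc.
have h4 : count (fun x => 10 <= x) c <= k + 3.
  clear -uc ac.
  rewrite -(size_iota 10 (k + 3)); apply: cnt_le => // x xs hx.
  by rewrite mem_iota; have := allP ac x xs; rewrite /=; lia.
have e1 := @touched_or c 1 (fun x => 2 <= x <= 3) Pc1.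
have e2 := @touched_or c 2 (fun x => 4 <= x <= 6) Pc2.
have e3 := @touched_or c 3 (fun x => 7 <= x <= 9) Pc3.
have e4 := @touched_or c 4 (fun x => 10 <= x) Pc4.
rewrite size_dec.
move: hK h0 h1 h2 h3 h4 e1 e2 e3 e4.
move: (touched _ _ c 1) (touched _ _ c 2) (touched _ _ c 3) (touched _ _ c 4) => t1 t2 t3 t4.
move: (count cut2 c) (count (fun x => 2 <= x <= 3) c) (count (fun x => 4 <= x <= 6) c) (count (fun x => 7 <= x <= 9) c) (count (fun x => 10 <= x) c) => c0 c1 c2 c3 c4.
move=> /(_ isT).
clear -big; lia.
Qed.


Lemma r2_iota i : 10 <= i -> r2 i i.+1.
Proof. rewrite /r2 /adj2; lia. Qed.

Definition cyc k u w := [:: 0; u; w; 1; 10] ++ iota 11 k.+2.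

Lemma cyc_cycle k u w : r2 0 u -> r2 u w -> r2 w 1 -> cycle r2 (cyc k u w).
Proof.
move=> h1 h2 h3; rewrite /cyc /= rcons_path last_iota path_iota; last by move=> i hi; apply: r2_iota; lia.
rewrite h1 h2 h3 /=; rewrite /r2 /adj2; lia.
Qed.

Lemma cyc_uniq k u w : 2 <= u <= 9 -> 2 <= w <= 9 -> u != w -> uniq (cyc k u w).
Proof.
move=> hu hw uw; rewrite /cyc cat_uniq iota_uniq andbT; apply/andP; split.
  rewrite /= !inE; lia.
apply/hasPn => x; rewrite mem_iota !inE; lia.
Qed.

Lemma cyc_size k u w : size (cyc k u w) = k + 7.
Proof. rewrite /cyc size_cat size_iota /=; lia. Qed.

Lemma cyc_lt k u w : 2 <= u <= 9 -> 2 <= w <= 9 -> all (gtn (k + 13)) (cyc k u w).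
Proof. move=> hu hw; apply/allP => x; rewrite /cyc mem_cat mem_iota !inE /=; lia. Qed.

Lemma cyc_mem k u w x : x \in [:: 0; u; w; 1] -> x \in cyc k u w.
Proof. by rewrite /cyc mem_cat !inE => /or4P [] ->; rewrite ?orbT. Qed.

Lemma cyc_memY k u w x : 10 <= x < k + 13 -> x \in cyc k u w.
Proof. rewrite /cyc mem_cat mem_iota !inE; lia. Qed.

Definition LP k := [:: 5; 4; 6; 0; 10] ++ iota 11 k.+2 ++ [:: 1; 8; 7; 9].

Lemma LP_path k : sorted r2 (LP k).
Proof.
rewrite /LP /= cat_path path_iota ?last_iota; last by move=> i hi; apply: r2_iota; lia.
rewrite /=; rewrite /r2 /adj2; lia.
Qed.

Lemma LP_uniq k : uniq (LP k).
Proof.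
rewrite /LP cat_uniq; apply/and3P; split => //.
- apply/hasPn => x; rewrite mem_cat mem_iota !inE; lia.
- rewrite cat_uniq iota_uniq /= andbT !inE !mem_iota; lia.
Qed.

Lemma LP_size k : size (LP k) = k + 11.
Proof. rewrite /LP !size_cat size_iota /=; lia. Qed.

Lemma LP_lt k : all (gtn (k + 13)) (LP k).
Proof. apply/allP => x; rewrite /LP !mem_cat mem_iota !inE /=; lia. Qed.

Definition walk2 (w x : nat) : seq nat :=
  if w == 0 then
    (if x == 1 then [::] else if (x == 5) || (x == 6) then [:: 4; 1]
     else if x == 7 then [:: 8; 1] else [:: 1])
  else
    (if x == 0 then [::] else if x == 1 then [:: (if w == 2 then 3 else 2); 0]
     else if x == 4 then [:: (if w == 5 then 6 else 5); 0]
     else if (x == 8) || (x == 9) then (if w == 7 then [:: 1; 2; 0] else [:: 7; 0])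
     else [:: 0]).

Lemma walk2_ok n w x : 13 <= n -> x < n -> x != w ->
  [/\ path r2 x (walk2 w x), last x (walk2 w x) = (if w == 0 then 1 else 0)
    & all (fun y => (y < n) && (y != w)) (walk2 w x)].
Proof.
move=> n13 xn xw; rewrite /walk2.
case: (eqVneq w 0) xw => [->|w0] xw /=.
  case: (eqVneq x 1) => [->|x1] //=.
  case: (boolP ((x == 5) || (x == 6))) => h56 /=.
    by split => //; rewrite /r2 /adj2 /=; lia.
  case: (eqVneq x 7) => [->|x7] /=; first by split => //; rewrite /r2 /adj2 /=; lia.
  by split => //; rewrite /r2 /adj2 /=; lia.
case: (eqVneq x 0) => [->|x0] //=.
case: (eqVneq x 1) => [->|x1] /=.
  by case: (eqVneq w 2) => [->|w2] /=; split => //; rewrite /r2 /adj2 /=; lia.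
case: (eqVneq x 4) => [->|x4] /=.
  by case: (eqVneq w 5) => [->|w5] /=; split => //; rewrite /r2 /adj2 /=; lia.
case: (boolP ((x == 8) || (x == 9))) => h89 /=.
  by case: (eqVneq w 7) => [->|w7] /=; split => //; rewrite /r2 /adj2 /=; lia.
by split => //; rewrite /r2 /adj2 /=; lia.
Qed.

Lemma pick_cyc k x : x < k + 13 -> exists u w,
  [/\ r2 0 u, r2 u w, r2 w 1 & [/\ 2 <= u <= 9, 2 <= w <= 9, u != w & x \in cyc k u w]].
Proof.
move=> xn.
case: (boolP ((x <= 3) || (10 <= x))) => hx.
  exists 2, 3; split => //; split => //; case/orP: hx => hx.
    by apply: cyc_mem; rewrite !inE; lia.
  by apply: cyc_memY; lia.
have : x \in [:: 4; 5; 6; 7; 8; 9] by rewrite !inE; lia.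
rewrite !inE => /or4P [/eqP->|/eqP->|/eqP->|/orP[/eqP->|/orP[/eqP->|/eqP->]]].
- by exists 5, 4; split => //; split => //; apply: cyc_mem; rewrite !inE.
- by exists 5, 4; split => //; split => //; apply: cyc_mem; rewrite !inE.
- by exists 6, 4; split => //; split => //; apply: cyc_mem; rewrite !inE.
- by exists 7, 8; split => //; split => //; apply: cyc_mem; rewrite !inE.
- by exists 7, 8; split => //; split => //; apply: cyc_mem; rewrite !inE.
- by exists 7, 9; split => //; split => //; apply: cyc_mem; rewrite !inE.
Qed.

Lemma part2_big k : exists e : rel 'I_(k + 13),
  [/\ simple_graph e, two_connected e, cummerbund_covered e & ~ detour_covered e].
Proof.
exists (E r2); split.
- exact: simple_E r2_sym r2_irr.
- split.
  + by rewrite card_ord; lia.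
  + apply: (@conn_hub _ r2 setT (fun y => y != k + 13) 0) => //; first exact: r2_sym.
    * by move=> x; rewrite in_setT; have := ltn_ord x; lia.
    * lia.
    * lia.
    * move=> x xn xw; have [p1 p2 p3] := @walk2_ok (k + 13) (k + 13) x ltac:(lia) xn xw.
      exists (walk2 (k + 13) x); split => //.
        by move: p2; have -> : (k + 13 == 0) = false by lia.
  + move=> w.
    apply: (@conn_hub _ r2 _ (fun y => y != val w) (if val w == 0 then 1 else 0)); first exact: r2_sym.
    * by move=> x; rewrite in_setD1 in_setT andbT val_eqE.
    * by case: (val w == 0); lia.
    * by case: (eqVneq (val w) 0) => [->|h] //=; rewrite eq_sym.
    move=> x xn xw; have [p1 p2 p3] := @walk2_ok (k + 13) (val w) x ltac:(lia) xn xw.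
    by exists (walk2 (val w) x); split.
- move=> v.
  have [u [w [h1 h2 h3 [hu hw uw vin]]]] := pick_cyc (ltn_ord v).
  have [p Hp] := lift_seq (cyc_lt k hu hw).
  exists p; split; last by rewrite -(mem_map val_inj) Hp.
  split.
    by apply/is_cycle_E; rewrite Hp cyc_size cyc_uniq // cyc_cycle //; split => //; lia.
  move=> d /is_cycle_E [_ ud cd].
  have := @p2_cyc k (map val d) ud cd.
  have -> : all (gtn (k + 13)) (map val d) by apply/allP => z /mapP [y _ ->]; exact: ltn_ord.
  move=> /(_ isT); rewrite size_map -(size_map val p) Hp cyc_size; exact.
- move=> H.
  have h2 : 2 < k + 13 by lia.
  have [c [[Hc Hmax] vc]] := H (Ordinal h2).
  have [p Hp] := lift_seq (LP_lt k).
  have : is_path (E r2) p by apply/is_path_E; rewrite Hp LP_uniq LP_path /LP.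
  move/Hmax; rewrite -(size_map val p) Hp LP_size.
  case/is_path_E: Hc => _ uc sc.
  have := @p2_path k (map val c) uc sc.
  have -> : 2 \in map val c by apply/mapP; exists (Ordinal h2).
  move=> /(_ isT).
  have -> : all (gtn (k + 13)) (map val c) by apply/allP => z /mapP [y _ ->]; exact: ltn_ord.
  rewrite size_map; move=> /(_ isT) h1 h3; have := leq_trans h3 h1; lia.
Qed.


Definition ext (r : rel nat) N (P : seq (seq nat)) : seq (seq nat) :=
  flatten (map (fun p => map (fun x => x :: p) (filter (fun x => (x \notin p) && r x (head 0 p)) (iota 0 N))) P).
Definition allp (r : rel nat) N k := iter k (ext r N) (map (fun x => [:: x]) (iota 0 N)).

Lemma allp_complete r N s : s != [::] -> uniq s -> sorted r s -> all (gtn N) s -> s \in allp r N (size s).-1.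
Proof.
elim: s => [|x t IH] // _ /= /andP[xt ut] st /andP[xN tN].
case: t IH xt ut st tN => [|y t] IH xt ut st tN.
  by rewrite /allp /=; apply: map_f; rewrite mem_iota; lia.
have := IH isT ut (path_sorted st) tN.
move=> H; change (x :: y :: t \in ext r N (allp r N (size t))).
apply/flatten_mapP; exists (y :: t) => //.
apply: map_f; rewrite mem_filter xt mem_iota /=; move: st => /= /andP[-> _]; lia.
Qed.

Definition edges12 : seq (nat * nat) :=
  [:: (0,2); (0,3); (0,5); (0,6); (0,7); (0,10); (0,11);
      (1,2); (1,3); (1,4); (1,8); (1,9); (1,10); (1,11);
      (2,3); (4,6); (7,8); (7,9); (10,11); (4,7); (5,8)].
Definition r12 (i j : nat) : bool :=
  (i != j) && has (fun e => ((e.1 == i) && (e.2 == j)) || ((e.1 == j) && (e.2 == i))) edges12.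
Lemma r12_sym : symmetric r12.
Proof. by move=> i j; rewrite /r12 eq_sym; congr (_ && _); apply: eq_has => e; rewrite orbC. Qed.
Lemma r12_irr : irreflexive r12.
Proof. by move=> i; rewrite /r12 eqxx. Qed.

Definition chk12 := all (fun k => all (fun s => ((9 \in s) ==> (size s <= 10)) && (cycle r12 s ==> (size s <= 8)))
  (allp r12 12 k)) (iota 0 12).
Lemma chk12_ok : chk12 = true. Proof. by vm_compute. Qed.

Definition Wl := flatten [seq allp r12 12 k | k <- iota 0 12].
Definition hub (w : nat) := if w == 0 then 1 else 0.
Definition good w x (s : seq nat) := (head 0 s == x) && (last 0 s == hub w) && all (fun y => y != w) s.
Definition walk12 w x := nth [::] Wl (find (good w x) Wl).
Definition chkw := all (fun w => all (fun x => (x == w) || (let s := walk12 w x in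
   (s != [::]) && good w x s && sorted r12 s && all (gtn 12) s)) (iota 0 12)) (iota 0 13).
Lemma chkw_ok : chkw = true. Proof. by vm_compute. Qed.


Lemma chk12_all s : s != [::] -> uniq s -> sorted r12 s -> all (gtn 12) s ->
  ((9 \in s) ==> (size s <= 10)) && (cycle r12 s ==> (size s <= 8)).
Proof.
move=> s0 us ss as_.
have sz : size s <= 12.
  have -> : size s = size (map (fun x => x) s) by rewrite map_id.
  rewrite map_id -(size_iota 0 12); apply: uniq_leq_size => // x xs.
  by rewrite mem_iota; have := allP as_ x xs; rewrite /=; lia.
have hk : (size s).-1 \in iota 0 12 by rewrite mem_iota; lia.
have := chk12_ok; rewrite /chk12 => /allP /(_ _ hk) /allP; apply.
exact: allp_complete.
Qed.

Lemma walk12_ok w x : w < 13 -> x < 12 -> x != w ->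
  exists t, [/\ path r12 x t, last x t = hub w & all (fun y => (y < 12) && (y != w)) t].
Proof.
move=> wn xn xw.
have := chkw_ok; rewrite /chkw => /allP /(_ w); rewrite mem_iota => /(_ ltac:(lia)) /allP /(_ x).
rewrite mem_iota (negbTE xw) /= => /(_ ltac:(lia)).
case: (walk12 w x) => [|y t] //= /and3P[/andP[gd st] _ tn].
move: gd; rewrite /good /= => /andP[/andP[/eqP hy hl] /andP[_ ha]].
subst y; exists t; split => //.
  by apply/eqP.
apply/allP => z zt; rewrite (allP ha z zt) andbT; exact: (allP tn z zt).
Qed.

Definition c12a := [:: 0; 2; 3; 1; 4; 7; 8; 5].
Definition c12b := [:: 0; 2; 3; 1; 9; 7; 4; 6].
Definition c12c := [:: 0; 10; 11; 1; 4; 7; 8; 5].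
Definition p12 := [:: 2; 3; 1; 10; 11; 0; 5; 8; 7; 4; 6].

Lemma part2_12 : exists e : rel 'I_12,
  [/\ simple_graph e, two_connected e, cummerbund_covered e & ~ detour_covered e].
Proof.
exists (E r12); split.
- exact: simple_E r12_sym r12_irr.
- split.
  + by rewrite card_ord.
  + apply: (@conn_hub _ r12 setT (fun y => y != 12) 0) => //; first exact: r12_sym.
    * by move=> x; rewrite in_setT; have := ltn_ord x; lia.
    * move=> x xn xw; have [t [p1 p2 p3]] := @walk12_ok 12 x isT xn xw.
      by exists t.
  + move=> w.
    apply: (@conn_hub _ r12 _ (fun y => y != val w) (hub (val w))); first exact: r12_sym.
    * by move=> x; rewrite in_setD1 in_setT andbT val_eqE.
    * by rewrite /hub; case: (val w == 0).
    * by rewrite /hub; case: (eqVneq (val w) 0) => [->|h] //=; rewrite eq_sym.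
    move=> x xn xw; have [t [p1 p2 p3]] := @walk12_ok (val w) x (leqW (ltn_ord w)) xn xw.
    by exists t.
- move=> v.
  have hv : [|| val v \in c12a, val v \in c12b | val v \in c12c].
    by case: v => [[|[|[|[|[|[|[|[|[|[|[|[|m]]]]]]]]]]]] hm].
  have key : forall c : seq nat, c \in [:: c12a; c12b; c12c] -> val v \in c -> exists p, cummerbund (E r12) p /\ v \in p.
    move=> c hc vc.
    have cl : all (gtn 12) c by move: hc; rewrite !inE => /or3P [] /eqP ->.
    have [p Hp] := lift_seq cl.
    exists p; split; last by rewrite -(mem_map val_inj) Hp.
    split.
      apply/is_cycle_E; rewrite Hp; move: hc; rewrite !inE => /or3P [] /eqP -> //.
    move=> d /is_cycle_E [d3 ud cd].
    have sd : sorted r12 (map val d) by case: (map val d) cd => //= x s; rewrite rcons_path => /andP[].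
    have d0 : map val d != [::] by case: (map val d) d3.
    have ad : all (gtn 12) (map val d) by apply/allP => z /mapP [y _ ->]; exact: ltn_ord.
    have := chk12_all d0 ud sd ad; rewrite cd => /andP[_ /= h].
    rewrite -(size_map val d) -(size_map val p) Hp; apply: (leq_trans h).
    by move: hc; rewrite !inE => /or3P [] /eqP ->.
  by case/or3P: hv => hv; [apply: (key c12a) | apply: (key c12b) | apply: (key c12c)].
- move=> H.
  have h9 : 9 < 12 by [].
  have [c [[Hc Hmax] vc]] := H (Ordinal h9).
  have [p Hp] := lift_seq (n := 12) (L := p12) isT.
  have : is_path (E r12) p by apply/is_path_E; rewrite Hp.
  move/Hmax; rewrite -(size_map val p) Hp /=.
  case/is_path_E: Hc => c0 uc sc.
  have := @chk12_all (map val c) c0 uc sc.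
  have -> : all (gtn 12) (map val c) by apply/allP => z /mapP [y _ ->]; exact: ltn_ord.
  have -> : 9 \in map val c by apply/mapP; exists (Ordinal h9).
  move=> /(_ isT) /andP[/= h1 _] h3; move: h1; rewrite size_map => h1; have := leq_trans h3 h1; lia.
Qed.


Theorem theorem1 :
  (forall n : nat, 7 <= n ->
     exists e : rel 'I_n,
       [/\ simple_graph e, two_connected e, detour_covered e
         & ~ cummerbund_covered e]) /\
  (forall n : nat, 12 <= n ->
     exists e : rel 'I_n,
       [/\ simple_graph e, two_connected e, cummerbund_covered e
         & ~ detour_covered e]).
Proof.
split; first exact: part1.
move=> n n12; case: (eqVneq n 12) => [->|h]; first exact: part2_12.
have [k ->] : exists k, n = k + 13 by exists (n - 13); lia.
exact: part2_big.
Qed.
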